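(* Let $\rho\in(0,1)$ and let $(\gamma_{n})_{n\in\mathbb{N}}$ be nonnegative integrable functions on $[0,\infty)$ with $\int_{0}^{\infty}\gamma_{n}(t)dt\le\rho$ for all $n$. For $\theta\le\rho-1-\log\rho$ let $x(\theta)$ be the minimal real solution of $x=\theta+(e^{x}-1)\rho$. For a measurable function $t\mapsto f(t,\theta)$ on $[0,\infty)$ define $$F_{n}(t,\theta):=\theta+\int_{0}^{t}\left(e^{f(t-s,\theta)}-1\right)\gamma_{n}(s)\,ds,\qquad t\ge0.$$ (a) If $0\le\theta\le\rho-1-\log\rho$ and $f(t,\theta)\le x(\theta)$ for all $t\ge0$, then $F_{n}(t,\theta)\le x(\theta)$ for all $t\ge0$ and $n\in\mathbb{N}$. (b) If $\theta\le0$ and $f(t,\theta)\ge x(\theta)$ for all $t\ge0$, then $F_{n}(t,\theta)\ge x(\theta)$ for all $t\ge0$ and $n\in\mathbb{N}$. *)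

(* Defs.v *)
From HB Require Import structures.
From mathcomp Require Import all_boot all_order all_algebra.
From mathcomp Require Import all_classical all_reals all_analysis.
Set Implicit Arguments. Unset Strict Implicit. Unset Printing Implicit Defensive.
Import Order.TTheory GRing.Theory Num.Theory.
Local Open Scope ring_scope.

Definition min_solution (R : realType) (rho theta x : R) : Prop :=
  x = theta + (expR x - 1) * rho /\
  forall y : R, y = theta + (expR y - 1) * rho -> x <= y.

Definition Fn (R : realType) (theta : R) (f : R -> R) (gamma : R -> R) (t : R)
  : \bar R :=
  (theta%:E + \int[lebesgue_measure]_(s in `[0%R, t]%classic)
                 ((expR (f (t - s)) - 1) * gamma s)%:E)%E.

(* Main.v *)
Require Import Defs.
From HB Require Import structures.
From mathcomp Require Import all_boot all_order all_algebra.
From mathcomp Require Import all_classical all_reals all_analysis.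
From mathcomp Require Import ring lra.
Import Order.TTheory GRing.Theory Num.Theory.
Local Open Scope ring_scope.
Import numFieldNormedType.Exports.
Local Open Scope ereal_scope.

Lemma nn_mono d (T : measurableType d) (R : realType) (mu : {measure set T -> \bar R})
  (A B : set T) (f g : T -> \bar R) :
  (forall x, A x -> 0 <= f x) -> (forall x, B x -> 0 <= g x) ->
  (forall x, A x -> B x /\ f x <= g x) ->
  \int[mu]_(x in A) f x <= \int[mu]_(x in B) g x.
Proof.
move=> f0 g0 fg; rewrite (ge0_integralE _ f0) (ge0_integralE _ g0).
apply: ge_ereal_sup => _ [h /= hf <-]; apply: ereal_sup_ubound; exists h => //= x.
apply: le_trans (hf x) _; rewrite /patch.
case: ifPn => [/set_mem Ax|_]; last by case: ifPn => // /set_mem; exact: g0.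
by have [Bx fgx] := fg _ Ax; rewrite mem_set.
Qed.
Local Open Scope ring_scope.

Lemma x_le0 (R : realType) (rho theta x : R) :
  0 < rho -> theta <= 0 -> min_solution rho theta x -> x <= 0.
Proof.
move=> r0 th0 [_ xmin].
pose h := fun y : R => theta + (expR y - 1) * rho - y.
have [c] : exists2 c, c \in `[theta - rho, 0] & h c = 0.
  apply: IVT.
  - lra.
  - have ch : continuous h.
      move=> y; rewrite /h.
      apply: cvgB; last exact: cvg_id.
      apply: cvgD; first exact: cvg_cst.
      apply: cvgM; last exact: cvg_cst.
      apply: cvgB; [exact: continuous_expR | exact: cvg_cst].
    exact: continuous_subspaceT.
  - rewrite /h expR0 subrr mul0r addr0 subr0.
    have := expR_gt0 (theta - rho) => e0.
    have -> : theta + (expR (theta - rho) - 1) * rho - (theta - rho) = expR (theta - rho) * rho by ring.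
    have hp : 0 < expR (theta - rho) * rho by apply: mulr_gt0.
    rewrite ge_min le_max; apply/andP; split; apply/orP; [right|left]; lra.
rewrite in_itv /= => /andP[_ c0] hc.
apply: le_trans (xmin c _) c0; rewrite /h in hc; lra.
Qed.

Lemma Ifin (R : realType) (rho : R) (gam : R -> R) :
  (forall t, 0 <= t -> 0 <= gam t) ->
  (\int[lebesgue_measure]_(t in `[0%R, +oo[%classic) (gam t)%:E <= rho%:E)%E ->
  exists G : R, (\int[lebesgue_measure]_(t in `[0%R, +oo[%classic) (gam t)%:E = G%:E)%E
    /\ 0 <= G <= rho.
Proof.
move=> g0 gr.
have i0 : (0 <= \int[lebesgue_measure]_(t in `[0%R, +oo[%classic) (gam t)%:E)%E.
  apply: integral_ge0 => t /=; rewrite in_itv /= andbT => t0; rewrite lee_fin; exact: g0.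
move: i0 gr; case: (\int[_]_(_ in _) _)%E => [G| |] //= G0 Gr.
by exists G; split => //; rewrite -!lee_fin G0 Gr.
Qed.

Lemma key_bound (R : realType) (gam : R -> R) (A : set R) (h : R -> \bar R) (c G : R) :
  0 <= c ->
  (forall t, 0 <= t -> 0 <= gam t) ->
  lebesgue_measure.-integrable `[0%R, +oo[%classic (fun t => (gam t)%:E) ->
  (\int[lebesgue_measure]_(t in `[0%R, +oo[%classic) (gam t)%:E = G%:E)%E ->
  (forall s, A s -> 0 <= s /\ (0 <= h s <= (c * gam s)%:E)%E) ->
  (\int[lebesgue_measure]_(s in A) h s <= (c * G)%:E)%E.
Proof.
move=> c0 g0 mg IG hA.
have B0 : forall s, (`[0%R, +oo[%classic : set R) s -> 0 <= s.
  by move=> s /=; rewrite in_itv /= andbT.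
apply: le_trans (@nn_mono _ _ _ lebesgue_measure A `[0%R, +oo[%classic h
   (fun s => (c%:E * (gam s)%:E)%E) _ _ _) _.
- by move=> s /hA [_ /andP[]].
- by move=> s /B0 s0; rewrite -EFinM lee_fin mulr_ge0 // g0.
- move=> s /hA [s0 /andP[_ hs]]; split; last by rewrite -EFinM.
  by rewrite /= in_itv /= andbT.
have mI : measurable (`[0%R, +oo[%classic : set R) by exact: measurable_itv.
have gp : forall s, (`[0%R, +oo[%classic : set R) s -> (0 <= (gam s)%:E)%E.
  by move=> s /B0 s0; rewrite lee_fin g0.
have := ge0_integralZl_EFin lebesgue_measure mI gp (measurable_int _ mg) c0.
rewrite /= => ->.
by rewrite IG -EFinM.
Qed.

Theorem lemma4p6 (R : realType) (rho : R) (gamma : nat -> R -> R)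
  (theta : R) (f : R -> R) (x : R) :
  0 < rho < 1 ->
  (forall n t, 0 <= t -> 0 <= gamma n t) ->
  (forall n, lebesgue_measure.-integrable `[0%R, +oo[%classic
               (fun t => (gamma n t)%:E)) ->
  (forall n, (\int[lebesgue_measure]_(t in `[0%R, +oo[%classic)
               (gamma n t)%:E <= rho%:E)%E) ->
  theta <= rho - 1 - ln rho ->
  min_solution rho theta x ->
  measurable_fun (`[0%R, +oo[%classic : set R) f ->
  ((0 <= theta -> (forall t, 0 <= t -> f t <= x) ->
      forall n t, 0 <= t -> (Fn theta f (gamma n) t <= x%:E)%E)
   /\
   (theta <= 0 -> (forall t, 0 <= t -> x <= f t) ->
      forall n t, 0 <= t -> (x%:E <= Fn theta f (gamma n) t)%E)).
Proof.
move=> /andP[r0 r1] g0 gi gr _ hx mf; have [xe xmin] := hx.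
have ex := expR_ge1Dx x.
split.
- move=> th0 fx n t t0; rewrite /Fn.
  have x0 : 0 <= x by nra.
  have c0 : 0 <= expR x - 1 by lra.
  have [G [IG /andP[G0 Gr]]] := @Ifin _ _ _ (g0 n) (gr n).
  rewrite integralE.
  set g := fun s => ((expR (f (t - s)) - 1) * gamma n s)%:E.
  have hP : (\int[lebesgue_measure]_(s in `[0%R, t]%classic) g^\+ s <= ((expR x - 1) * G)%:E)%E.
    apply: (@key_bound _ _ _ _ _ _ c0 (g0 n) (gi n) IG) => s /=; rewrite in_itv /= => /andP[s0 st].
    split => //; rewrite funepos_ge0 /= funeposE ge_max.
    apply/andP; split; last by rewrite lee_fin mulr_ge0 // g0.
    rewrite /g lee_fin; apply: ler_wpM2r; first by apply: g0.
    by rewrite lerB // ler_expR; apply: fx; lra.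
  have hN : (0 <= \int[lebesgue_measure]_(s in `[0%R, t]%classic) g^\- s)%E.
    by apply: integral_ge0 => s _; exact: funeneg_ge0.
  have hP0 : (0 <= \int[lebesgue_measure]_(s in `[0%R, t]%classic) g^\+ s)%E.
    by apply: integral_ge0 => s _; exact: funepos_ge0.
  have cG : (expR x - 1) * G <= (expR x - 1) * rho by apply: ler_wpM2l.
  move: hP hN hP0; case: (\int[_]_(_ in _) g^\+ _)%E => [p| |] //;
    case: (\int[_]_(_ in _) g^\- _)%E => [q| |] // hp hq hp0.
    rewrite -EFinB -EFinD lee_fin; rewrite !lee_fin in hp hq hp0; lra.
  by rewrite /= leNye.
- move=> th0 fx n t t0; rewrite /Fn.
  have x0 : x <= 0 by exact: (@x_le0 _ _ _ _ r0 th0 hx).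
  have e1 : expR x <= 1 by rewrite expR_le1.
  have c0 : 0 <= 1 - expR x by lra.
  have [G [IG /andP[G0 Gr]]] := @Ifin _ _ _ (g0 n) (gr n).
  rewrite integralE.
  set g := fun s => ((expR (f (t - s)) - 1) * gamma n s)%:E.
  have hN : (\int[lebesgue_measure]_(s in `[0%R, t]%classic) g^\- s <= ((1 - expR x) * G)%:E)%E.
    apply: (@key_bound _ _ _ _ _ _ c0 (g0 n) (gi n) IG) => s /=; rewrite in_itv /= => /andP[s0 st].
    split => //; rewrite funeneg_ge0 /= funenegE ge_max.
    apply/andP; split; last by rewrite lee_fin mulr_ge0 // g0.
    rewrite /g -EFinN lee_fin -mulNr; apply: ler_wpM2r; first by apply: g0.
    by rewrite opprB lerB // ler_expR; apply: fx; lra.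
  have hN0 : (0 <= \int[lebesgue_measure]_(s in `[0%R, t]%classic) g^\- s)%E.
    by apply: integral_ge0 => s _; exact: funeneg_ge0.
  have hP0 : (0 <= \int[lebesgue_measure]_(s in `[0%R, t]%classic) g^\+ s)%E.
    by apply: integral_ge0 => s _; exact: funepos_ge0.
  have cG : (1 - expR x) * G <= (1 - expR x) * rho by apply: ler_wpM2l.
  move: hN hN0 hP0; case: (\int[_]_(_ in _) g^\+ _)%E => [p| |] //;
    case: (\int[_]_(_ in _) g^\- _)%E => [q| |] // hq hq0 hp0.
    rewrite -EFinB -EFinD lee_fin; rewrite !lee_fin in hp0 hq hq0; lra.
  by rewrite /= leey.
Qed.
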